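(* Let $d\ge1$, $L\ge1$, and let $\ell:[0,1]^2\to\mathbb{R}_{\ge0}$ be continuous with $\ell(y,y)=0$ for all $y\in[0,1]$. For every sequence $(x_t)_{t\ge1}\subseteq[-1,1]^d$ and every $f^\star\in\mathcal{H}_L$ with $y_t=f^\star(x_t)$, the (deterministic) envelope strategy satisfies $\lim_{t\to\infty}\ell(\hat y_t,y_t)=0$.
   Context: $\mathcal{H}_L$ is the set of functions $h:[-1,1]^d\to[0,1]$ with $|h(x)-h(x')|\le L\|x-x'\|_\infty$. Envelope strategy: at round $t$, with past data $(x_s,y_s)_{s<t}$, define $\underline h_t(x)=\max\{0,\max_{s<t}(y_s-L\|x-x_s\|_\infty)\}$ and $\overline h_t(x)=\min\{1,\min_{s<t}(y_s+L\|x-x_s\|_\infty)\}$ (with $\max_{\emptyset}=-\infty$, $\min_\emptyset=+\infty$), and predict $\hat y_t=\frac12(\underline h_t(x_t)+\overline h_t(x_t))$. *)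

(* Defs.v *)
From HB Require Import structures.
From mathcomp Require Import all_boot all_order all_algebra.
From mathcomp Require Import all_classical all_reals topology normedtype sequences.
Set Implicit Arguments. Unset Strict Implicit. Unset Printing Implicit Defensive.
Import Order.TTheory GRing.Theory Num.Theory.
Import numFieldNormedType.Exports.
Local Open Scope ring_scope.
Local Open Scope classical_set_scope.

Section Defs.
Variables (R : realType) (d : nat).

Definition pt := 'I_d -> R.

(* sup-norm distance ||x - x'||_oo (as d >= 1, max with 0 is harmless) *)
Definition supdist (x x' : pt) : R := \big[Num.max/0]_(i < d) `|x i - x' i|.

Definition in_cube (x : pt) : Prop := forall i, -1 <= x i <= 1.

Definition in_HL (L : R) (h : pt -> R) : Prop :=
  (forall x, in_cube x -> 0 <= h x <= 1) /\
  (forall x x', in_cube x -> in_cube x' -> `|h x - h x'| <= L * supdist x x').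

(* Rounds are indexed from 0; the past at round t is s < t. *)
Definition env_lo (L : R) (xs : nat -> pt) (ys : nat -> R) (t : nat) (x : pt) : R :=
  \big[Num.max/0]_(s < t) (ys s - L * supdist x (xs s)).

Definition env_hi (L : R) (xs : nat -> pt) (ys : nat -> R) (t : nat) (x : pt) : R :=
  \big[Num.min/1]_(s < t) (ys s + L * supdist x (xs s)).

Definition env_pred (L : R) (xs : nat -> pt) (ys : nat -> R) (t : nat) : R :=
  (env_lo L xs ys t (xs t) + env_hi L xs ys t (xs t)) / 2.

End Defs.

(* Main.v *)
Require Import Defs.
From HB Require Import structures.
From mathcomp Require Import all_boot all_order all_algebra.
From mathcomp Require Import all_classical all_reals topology normedtype sequences.
From mathcomp Require Import ring lra.
Set Implicit Arguments. Unset Strict Implicit.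
Import Order.TTheory GRing.Theory Num.Theory.
Import numFieldNormedType.Exports.
Local Open Scope ring_scope.
Local Open Scope classical_set_scope.

Lemma supdist_lt (R : realType) d (x x' : pt R d) e : 0 < e ->
  (forall i, `|x i - x' i| < e) -> supdist x x' < e.
Proof.
move=> e0 h; rewrite /supdist; elim/big_ind: _ => //.
by move=> a b ha hb; rewrite gt_max ha hb.
Qed.

Definition cell (R : realType) d (eta : R) (M : nat) (x : pt R d) :
  {ffun 'I_d -> 'I_M.+1} :=
  [ffun i => inord (Num.truncn ((x i + 1) / eta))].
Arguments cell {R d}.

Lemma cell_close (R : realType) d (eta : R) (x x' : pt R d) :
  0 < eta -> in_cube x -> in_cube x' ->
  cell eta (Num.truncn (2 / eta)) x = cell eta (Num.truncn (2 / eta)) x' ->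
  supdist x x' < eta.
Proof.
move=> e0 hx hx' heq; apply: supdist_lt => // i.
have hM := @truncn_itv R (2 / eta) (ltW (divr_gt0 (ltr0n R 2) e0)).
move: hM => /andP[_ hM].
have key : forall z : R, -1 <= z <= 1 ->
   0 <= (z + 1) / eta /\ (Num.truncn ((z + 1) / eta) < (Num.truncn (2 / eta)).+1)%N.
  move=> z /andP[z1 z2].
  have z0 : 0 <= (z + 1) / eta by apply: divr_ge0; [lra | exact: ltW].
  split => //.
  have := truncn_itv z0 => /andP[h1 _].
  rewrite -(ltr_nat R); apply: le_lt_trans h1 _; apply: le_lt_trans hM.
  by rewrite ler_pM2r ?invr_gt0 //; lra.
have [u0 ku] := key _ (hx i).
have [u'0 ku'] := key _ (hx' i).
move/ffunP: heq => /(_ i) /(congr1 val); rewrite !ffunE /=.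
rewrite !inordK // => ht.
have := truncn_itv u0; have := truncn_itv u'0; rewrite ht.
set k := (Num.truncn _)%:R; set k1 := (Num.truncn _).+1%:R.
have hk1 : k1 = k + 1 by rewrite /k1 /k -natr1.
rewrite hk1 => /andP[a1 a2] /andP[b1 b2].
have ex : x i = (x i + 1) / eta * eta - 1 by rewrite mulfVK ?gt_eqF //; ring.
have ex' : x' i = (x' i + 1) / eta * eta - 1 by rewrite mulfVK ?gt_eqF //; ring.
rewrite ex ex'; set u := (x i + 1) / eta; set u' := (x' i + 1) / eta.
move: a1 a2 b1 b2; rewrite -/u -/u' => a1 a2 b1 b2.
apply/ltr_normlP; split; nra.
Qed.

Lemma eventually_close (R : realType) d (xs : nat -> pt R d) (eta : R) :
  0 < eta -> (forall t, in_cube (xs t)) ->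
  exists N, forall t, (N <= t)%N -> exists2 s, (s < t)%N & supdist (xs t) (xs s) < eta.
Proof.
move=> e0 hcube.
set M := Num.truncn (2 / eta).
pose badb t := [forall s : 'I_t, eta <= supdist (xs t) (xs s)].
pose c n := count badb (iota 0 n).
have cle : forall n, (c n <= #|{ffun 'I_d -> 'I_M.+1}|)%N.
  move=> n; rewrite /c -size_filter.
  have U : uniq [seq cell eta M (xs t) | t <- seq.filter badb (iota 0 n)].
    rewrite map_inj_in_uniq ?filter_uniq ?iota_uniq //.
    move=> t t'; rewrite !mem_filter => /andP[bt _] /andP[bt' _] heq.
    have H : forall a b, (a < b)%N -> badb b ->
        cell eta M (xs a) = cell eta M (xs b) -> False.
      move=> a b ab bb hab.
      have := (forallP bb) (Ordinal ab) => /=.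
      have := cell_close e0 (hcube b) (hcube a) (esym hab).
      by move=> h1 h2; move: (le_lt_trans h2 h1); rewrite ltxx.
    case: (ltngtP t t') => h //.
    - by exfalso; exact: H h bt' heq.
    - by exfalso; exact: H h bt (esym heq).
  move/card_uniqP: U; rewrite size_map => <-; exact: max_card.
have cmono : forall n m, (n <= m)%N -> (c n <= c m)%N.
  move=> n m /subnK <-; rewrite /c addnC iotaD count_cat; exact: leq_addr.
have cS : forall t, badb t -> c t.+1 = (c t).+1.
  by move=> t bt; rewrite /c -addn1 iotaD count_cat /= bt addn0 addn1.
have [[N HN]|hN] := pselect (exists N, forall t, (N <= t)%N -> ~~ badb t).
  exists N => t /HN; rewrite negb_forall => /existsP [s].
  by rewrite -ltNge => hs; exists s.
exfalso.
have hb : forall N, exists t, (N <= t)%N && badb t.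
  move=> N; have [//|h] := pselect (exists t, (N <= t)%N && badb t).
  exfalso; apply: hN; exists N => t Nt; apply/negP => bt; apply: h.
  by exists t; rewrite Nt bt.
have grow : forall k, exists n, (k <= c n)%N.
  elim=> [|k [n hn]]; first by exists 0%N.
  have [t /andP[nt bt]] := hb n.
  exists t.+1; rewrite cS // ltnS; exact: leq_trans hn (cmono _ _ nt).
have [n hn] := grow (#|{ffun 'I_d -> 'I_M.+1}|.+1).
by have := cle n; rewrite leqNgt hn.
Qed.
Lemma unif_ell (R : realType) (ell : R -> R -> R) :
  {within [set p : R * R | (0 <= p.1 <= 1) /\ (0 <= p.2 <= 1)],
     continuous (fun p : R * R => ell p.1 p.2)} ->
  (forall y, 0 <= y <= 1 -> ell y y = 0) ->
  forall e : R, 0 < e -> exists2 del : R, 0 < del &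
    forall a b, 0 <= a <= 1 -> 0 <= b <= 1 -> `|a - b| < del -> ell a b < e.
Proof.
move=> hc hd e e0.
set P := fun (i : R) (y : R) => forall a b, 0 <= a <= 1 -> 0 <= b <= 1 ->
   `|a - y| < i -> `|b - y| < i -> ell a b < e.
have hcov : \forall i \near (0:R)^'+, `[0, 1] `<=` P i.
  have hK : compact (`[0, 1]%classic : set R) by exact: segment_compact.
  move/compact_near_coveringP: hK => hK.
  apply: (hK R (nbhs (0:R)^'+) P _).
  move=> y; rewrite /= in_itv /= => /andP[y0 y1].
  have Ayy : [set p : R * R | (0 <= p.1 <= 1) /\ (0 <= p.2 <= 1)] (y, y).
    by rewrite /= y0 y1.
  have := (proj1 (subspace_continuousP _ _) hc (y, y) Ayy).
  move/cvgrPdist_lt => /(_ e e0).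
  rewrite /from_subspace /= hd ?y0 ?y1 // => hnear.
  have := hnear; rewrite /within => /nbhs_ballP [eta /= eta0 heta].
  exists ([set y' | `|y - y'| < eta / 2], [set i | 0 < i < eta / 2]).
    split => /=.
      apply/nbhs_ballP; exists (eta / 2); first by rewrite /= divr_gt0.
      by move=> z; rewrite -ball_normE.
    have eta2 : 0 < eta / 2 by rewrite divr_gt0.
    have hh : \forall i \near (0:R)^'+, 0 < i < eta / 2.
      near=> i; apply/andP; split; near: i; [exact: nbhs_right_gt|].
      exact: nbhs_right_lt.
    exact: hh.
  case=> y' i /= [hy' /andP[i0 ih]] a b ha hb hay hby.
  have := heta (a, b); rewrite /ball /= sub0r normrN.
  have hya : `|y - a| < eta.
    rewrite (_ : y - a = (y - y') + (y' - a)); last by rewrite addrA subrK.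
    have := ler_normD (y - y') (y' - a); rewrite (distrC y' a); lra.
  have hyb : `|y - b| < eta.
    rewrite (_ : y - b = (y - y') + (y' - b)); last by rewrite addrA subrK.
    have := ler_normD (y - y') (y' - b); rewrite (distrC y' b); lra.
  move=> /(_ _ (conj ha hb)).
  have hp : prod_ball (y, y) eta (a, b).
    by split; rewrite /= -ball_normE.
  by move=> /(_ hp) /ltr_normlP [].
have [i [/= i0 Hi]] := filter_ex (filterI (nbhs_right_gt (0:R)) hcov).
exists i => // a b ha hb hab.
have hb' : `[0, 1]%classic b by rewrite /= in_itv.
apply: (Hi b hb' a b ha hb hab).
by rewrite subrr normr0.
Unshelve. all: by end_near.
Qed.

Lemma env_bounds (R : realType) d (L : R) (xs : nat -> pt R d) (f : pt R d -> R) t :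
  (forall t, in_cube (xs t)) -> in_HL L f ->
  let lo := env_lo L xs (fun s => f (xs s)) t (xs t) in
  let hi := env_hi L xs (fun s => f (xs s)) t (xs t) in
  [/\ 0 <= lo, lo <= f (xs t), f (xs t) <= hi, hi <= 1 &
   forall s, (s < t)%N -> hi - lo <= 2 * (L * supdist (xs t) (xs s))].
Proof.
move=> hc [hf hL] lo hi.
have [f0 f1] := andP (hf _ (hc t)).
have lip : forall s, `|f (xs t) - f (xs s)| <= L * supdist (xs t) (xs s).
  by move=> s; apply: hL.
split.
- by rewrite /lo /env_lo; apply: bigmax_ge_id.
- rewrite /lo /env_lo; apply: (big_ind (fun v => v <= f (xs t))) => //.
    by move=> a b ha hb; rewrite ge_max ha hb.
  move=> s _; have := lip s; move/ler_normlP => [h1 h2]; lra.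
- rewrite /hi /env_hi; apply: (big_ind (fun v => f (xs t) <= v)) => //.
    by move=> a b ha hb; rewrite le_min ha hb.
  move=> s _; have := lip s; move/ler_normlP => [h1 h2]; lra.
- by rewrite /hi /env_hi; apply: bigmin_le_id.
- move=> s st.
  have h1 : hi <= f (xs s) + L * supdist (xs t) (xs s).
    rewrite /hi /env_hi; exact: (bigmin_le _ (Ordinal st) (fun s : 'I_t => f (xs s) + L * supdist (xs t) (xs s))).
  have h2 : f (xs s) - L * supdist (xs t) (xs s) <= lo.
    rewrite /lo /env_lo; exact: (le_bigmax _ (fun s : 'I_t => f (xs s) - L * supdist (xs t) (xs s)) (Ordinal st)).
  lra.
Qed.

Theorem corollary1p4 (R : realType) (d : nat) (L : R) (ell : R -> R -> R)
  (xs : nat -> pt R d) (fstar : pt R d -> R) :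
  (1 <= d)%N -> 1 <= L ->
  {within [set p : R * R | (0 <= p.1 <= 1) /\ (0 <= p.2 <= 1)],
     continuous (fun p : R * R => ell p.1 p.2)} ->
  (forall a b, 0 <= a <= 1 -> 0 <= b <= 1 -> 0 <= ell a b) ->
  (forall y, 0 <= y <= 1 -> ell y y = 0) ->
  (forall t, in_cube (xs t)) ->
  in_HL L fstar ->
  (fun t => ell (env_pred L xs (fun s => fstar (xs s)) t) (fstar (xs t)))
    @ \oo --> (0 : R).
Proof.
move=> _ L1 hc hpos hd hcube hHL.
apply/cvgrPdist_lt => e e0.
have [del del0 hdel] := unif_ell hc hd e0.
have L0 : 0 < L by apply: lt_le_trans L1.
have [N HN] := eventually_close (divr_gt0 del0 L0) hcube.
exists N => // t /= Nt.
have [s st hs] := HN t Nt.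
have [lo0 loy yhi hi1 hw] := env_bounds t hcube hHL.
have hw' := hw s st.
rewrite ltr_pdivlMr // in hs.
move: lo0 loy yhi hi1 hw'.
rewrite /env_pred.
set lo := env_lo _ _ _ _ _; set hi := env_hi _ _ _ _ _.
set D := supdist _ _; set y := fstar _ => lo0 loy yhi hi1 hw'.
have ha : 0 <= (lo + hi) / 2 <= 1 by apply/andP; split; lra.
have hb : 0 <= y <= 1 by apply/andP; split; lra.
have hab : `|(lo + hi) / 2 - y| < del.
  move: hs hw'; rewrite mulrC -/D; set P := L * D => hs hw'.
  apply/ltr_normlP; split; lra.
have := hdel _ _ ha hb hab.
by rewrite sub0r normrN ger0_norm //; apply: hpos.
Qed.
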